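(* Let $\mathbb{F}$ be a field with $\mathrm{char}(\mathbb{F})\neq 2$. The category $\mathbf{Alt}_1$ of unitary alternative $\mathbb{F}$-algebras is action representable: for every unitary alternative algebra $X$ there is a natural isomorphism of functors $\mathbf{Alt}^{\mathrm{op}}\to\mathbf{Set}$ $$\mathrm{SplExt}(-,U(X))\cong\mathrm{Hom}_{\mathbf{Alt}}(-,U(X)),$$ so the actor of $X$ is isomorphic to $X$ itself.
   Context: $\mathbf{Alt}$ is the variety of alternative $\mathbb{F}$-algebras: non-associative algebras satisfying $(yx)x=y(xx)$ and $x(xy)=(xx)y$. For a variety $\mathcal{V}$ of non-associative algebras closed under adjoining an external unit, $\mathcal{V}_1$ denotes the category of algebras in $\mathcal{V}$ having a multiplicative unit, with unit-preserving algebra homomorphisms, and $U\colon\mathcal{V}_1\to\mathcal{V}$ is the forgetful functor. For objects $B,X$ of $\mathcal{V}$, a split extension of $B$ by $X$ is a diagram $X\xrightarrow{k}A\underset{\beta}{\overset{\alpha}{\rightleftarrows}}B$ in $\mathcal{V}$ with $\alpha\circ\beta=\mathrm{id}_B$ and $(X,k)$ a kernel of $\alpha$; $\mathrm{SplExt}(B,X)$ is the set of isomorphism classes of such split extensions, and $\mathrm{SplExt}(-,X)\colon\mathcal{V}^{\mathrm{op}}\to\mathbf{Set}$ is the functor acting on morphisms $f\colon B'\to B$ by pullback along $f$. The category $\mathcal{V}_1$ is called action representable if for every object $X$ of $\mathcal{V}_1$ the functor $\mathrm{SplExt}(-,U(X))\colon\mathcal{V}^{\mathrm{op}}\to\mathbf{Set}$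 is representable, i.e. naturally isomorphic to $\mathrm{Hom}_{\mathcal{V}}(-,T)$ for some object $T$ of $\mathcal{V}$ (called the actor of $X$). *)

(* Defs.v *)
From HB Require Import structures.
From mathcomp Require Import all_boot all_order all_algebra.
Set Implicit Arguments. Unset Strict Implicit. Unset Printing Implicit Defensive.
Import GRing.Theory.
Local Open Scope ring_scope.

Section Alt.
Variable F : fieldType.

Record altAlg := AltAlg {
  aT :> lmodType F;
  amul : aT -> aT -> aT;
  amulDl : forall x y z, amul (x + y) z = amul x z + amul y z;
  amulDr : forall x y z, amul x (y + z) = amul x y + amul x z;
  amulZl : forall (a : F) x y, amul (a *: x) y = a *: amul x y;
  amulZr : forall (a : F) x y, amul x (a *: y) = a *: amul x y;
  alt_right : forall x y, amul (amul y x) x = amul y (amul x x);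
  alt_left : forall x y, amul x (amul x y) = amul (amul x x) y
}.

Definition has_unit (A : altAlg) : Prop :=
  exists e : A, forall x : A, amul e x = x /\ amul x e = x.

Definition isHom (A B : altAlg) (f : A -> B) : Prop :=
  [/\ forall x y : A, f (x + y) = f x + f y,
      forall (a : F) (x : A), f (a *: x) = a *: f x
    & forall x y : A, f (amul x y) = amul (f x) (f y)].

Record splExt (B X : altAlg) := SplExt {
  sA : altAlg;
  sk : X -> sA;
  salpha : sA -> B;
  sbeta : B -> sA;
  sk_hom : isHom sk;
  salpha_hom : isHom salpha;
  sbeta_hom : isHom sbeta;
  ssplit : forall b : B, salpha (sbeta b) = b;
  sk_inj : injective sk;
  sk_ker : forall a : sA, salpha a = 0 <-> exists x : X, a = sk x
}.

Arguments sA {B X} s.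
Arguments sk {B X} s.
Arguments salpha {B X} s.
Arguments sbeta {B X} s.

Definition splExt_iso (B X : altAlg) (E E' : splExt B X) : Prop :=
  exists phi : sA E -> sA E',
    [/\ isHom phi, bijective phi,
        forall x : X, phi (sk E x) = sk E' x,
        forall a : sA E, salpha E' (phi a) = salpha E a
      & forall b : B, phi (sbeta E b) = sbeta E' b].

(* E' (over B') is a pullback of E (over B) along f : B' -> B:
   there is a homomorphism g : A' -> A compatible with all the structure
   maps such that the square (g, alpha', alpha, f) is a pullback square
   (A' -> A x_B B', a' |-> (g a', alpha' a') is bijective). *)
Definition isPullback (B B' X : altAlg) (f : B' -> B)
    (E : splExt B X) (E' : splExt B' X) : Prop :=
  exists g : sA E' -> sA E,
    [/\ isHom g /\
        (forall a' : sA E', salpha E (g a') = f (salpha E' a')),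
        forall x : X, g (sk E' x) = sk E x,
        forall b' : B', g (sbeta E' b') = sbeta E (f b'),
        forall (a : sA E) (b' : B'), salpha E a = f b' ->
          exists a' : sA E', g a' = a /\ salpha E' a' = b'
      & forall a1 a2 : sA E', g a1 = g a2 -> salpha E' a1 = salpha E' a2 ->
          a1 = a2].

End Alt.

(* Main.v *)
Require Import Defs.
From mathcomp Require Import all_boot all_order all_algebra.
Set Implicit Arguments. Unset Strict Implicit.
Import GRing.Theory.
Local Open Scope ring_scope.

Lemma zmod4 (V : zmodType) (a b c d e f : V) :
  a + b + (c + d) = a + e + (f + d) -> b + c = e + f.
Proof.
move=> H; apply: (addrI a); apply: (addIr d); rewrite !addrA.
by rewrite !addrA in H.
Qed.

Section G.
Variables (F : fieldType) (A : altAlg F).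
Local Notation "x ** y" := (amul x y) (at level 40, left associativity).

Lemma mul0l (y : A) : 0 ** y = 0.
Proof. by have := amulZl 0 (0:A) y; rewrite !scale0r. Qed.
Lemma mul0r (y : A) : y ** 0 = 0.
Proof. by have := amulZr 0 y (0:A); rewrite !scale0r. Qed.
Lemma mulNl (x y : A) : (- x) ** y = - (x ** y).
Proof. by have := amulZl (-1) x y; rewrite !scaleN1r. Qed.
Lemma mulNr (x y : A) : y ** (- x) = - (y ** x).
Proof. by have := amulZr (-1) y x; rewrite !scaleN1r. Qed.
Lemma mulBl (x z y : A) : (x - z) ** y = x ** y - z ** y.
Proof. by rewrite amulDl mulNl. Qed.
Lemma mulBr (x z y : A) : y ** (x - z) = y ** x - y ** z.
Proof. by rewrite amulDr mulNr. Qed.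

Lemma lin_left (x z y : A) : x ** (z ** y) + z ** (x ** y) = (x ** z) ** y + (z ** x) ** y.
Proof.
have H := alt_left (x+z) y.
by rewrite !(amulDl, amulDr) !alt_left in H; apply: zmod4 H.
Qed.

Lemma lin_right (x z y : A) : (y ** z) ** x + (y ** x) ** z = y ** (x ** z) + y ** (z ** x).
Proof.
have H := alt_right (x+z) y.
by rewrite !(amulDl, amulDr) !alt_right in H; apply: zmod4 H.
Qed.

Variables (e : A) (P : A -> Prop).
Hypothesis hPl : forall a x, P x -> P (a ** x).
Hypothesis hPr : forall a x, P x -> P (x ** a).
Hypothesis hPe : P e.
Hypothesis hu1 : forall x, P x -> e ** x = x.
Hypothesis hu2 : forall x, P x -> x ** e = x.

Lemma e_comm (a : A) : e ** a = a ** e.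
Proof.
have H := lin_left e a e.
rewrite (hu1 (hPl a hPe)) (hu1 hPe) (hu2 (hPr a hPe)) (hu2 (hPl a hPe)) in H.
by move/addIr: H.
Qed.

Lemma n_l (a : A) : e ** (a - e ** a) = 0.
Proof. by rewrite mulBr (hu1 (hPr _ hPe)) subrr. Qed.
Lemma n_r (a : A) : (a - e ** a) ** e = 0.
Proof. by rewrite mulBl (hu2 (hPr _ hPe)) e_comm subrr. Qed.

Lemma xn0 (x n : A) : P x -> e ** n = 0 -> n ** e = 0 -> x ** n = 0.
Proof.
move=> Px en ne; have H := lin_left x e n.
rewrite en mul0r add0r (hu1 (hPr _ Px)) (hu2 Px) (hu1 Px) in H.
by apply/eqP; rewrite -(addrI _ (etrans (addr0 _) H)).
Qed.

Lemma nx0 (x n : A) : P x -> e ** n = 0 -> n ** e = 0 -> n ** x = 0.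
Proof.
move=> Px en ne; have H := lin_right e x n.
rewrite ne mul0l addr0 (hu2 (hPl _ Px)) (hu2 Px) (hu1 Px) in H.
by apply: (addrI (n ** x)); rewrite addr0.
Qed.

Lemma enm0 (n m : A) : e ** n = 0 -> n ** e = 0 -> e ** m = 0 -> e ** (n ** m) = 0.
Proof.
move=> en ne em; have H := lin_left e n m.
by rewrite em mul0r addr0 en ne !mul0l addr0 in H.
Qed.

Lemma R1 (x a : A) : P x -> x ** a = x ** (e ** a).
Proof.
move=> Px; rewrite -{1}(subrK (e ** a) a) amulDr xn0 ?add0r //.
  exact: n_l. exact: n_r.
Qed.

Lemma R2 (x a : A) : P x -> a ** x = (e ** a) ** x.
Proof.
move=> Px; rewrite -{1}(subrK (e ** a) a) amulDl nx0 ?add0r //.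
  exact: n_l. exact: n_r.
Qed.

Lemma R3 (a b : A) : e ** (a ** b) = (e ** a) ** (e ** b).
Proof.
have Ha : a = (a - e ** a) + e ** a by rewrite subrK.
have Hb : b = (b - e ** b) + e ** b by rewrite subrK.
rewrite {1}Ha {1}Hb.
move: (n_l a) (n_r a) (n_l b) (n_r b).
move: (a - e ** a) (b - e ** b) => n m en ne em me.
rewrite !(amulDl, amulDr).
rewrite (xn0 (x := e ** a) (hPr _ hPe) em me).
rewrite (nx0 (x := e ** b) (hPr _ hPe) en ne).
rewrite enm0 // mul0r !add0r.
exact: hu1 (hPr _ (hPr _ hPe)).
Qed.
End G.
From Stdlib Require Import ClassicalEpsilon.
Section S.
Variables (F : fieldType) (X : altAlg F) (eX : X).
Hypothesis heX : forall x : X, amul eX x = x /\ amul x eX = x.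
Local Notation "x ** y" := (amul x y) (at level 40, left associativity).

Lemma hom0 (A B : altAlg F) (f : A -> B) : isHom f -> f 0 = 0.
Proof. by case=> fD _ _; apply: (addrI (f 0)); rewrite -fD !addr0. Qed.

Section E.
Variables (B : altAlg F) (E : splExt B X).
Local Notation k := (sk E).
Local Notation al := (@salpha _ _ _ E).
Local Notation be := (sbeta E).

Definition kinv (a : sA E) : X := epsilon (inhabits 0) (fun x => k x = a).
Lemma kinvK (a : sA E) : al a = 0 -> k (kinv a) = a.
Proof.
move=> /(@sk_ker _ _ _ E _) [x ->]; rewrite /kinv.
by apply: (epsilon_spec (inhabits 0) (fun y => k y = k x)); exists x.
Qed.

Definition PhiE (b : B) : X := kinv (k eX ** be b).

Lemma kD x y : k (x + y) = k x + k y. Proof. by case: (sk_hom E). Qed.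
Lemma kZ c x : k (c *: x) = c *: k x. Proof. by case: (sk_hom E). Qed.
Lemma kM x y : k (x ** y) = k x ** k y. Proof. by case: (sk_hom E). Qed.
Lemma aD x y : al (x + y) = al x + al y. Proof. by case: (salpha_hom E). Qed.
Lemma aZ c x : al (c *: x) = c *: al x. Proof. by case: (salpha_hom E). Qed.
Lemma aM x y : al (x ** y) = al x ** al y. Proof. by case: (salpha_hom E). Qed.
Lemma bD x y : be (x + y) = be x + be y. Proof. by case: (sbeta_hom E). Qed.
Lemma bZ c x : be (c *: x) = c *: be x. Proof. by case: (sbeta_hom E). Qed.
Lemma bM x y : be (x ** y) = be x ** be y. Proof. by case: (sbeta_hom E). Qed.
Lemma k0 : k 0 = 0. Proof. exact: hom0 (sk_hom E). Qed.
Lemma a0 : al 0 = 0. Proof. exact: hom0 (salpha_hom E). Qed.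
Lemma b0 : be 0 = 0. Proof. exact: hom0 (sbeta_hom E). Qed.

Lemma ak x : al (k x) = 0. Proof. by apply/(@sk_ker _ _ _ E _); exists x. Qed.

Let P := fun a : sA E => al a = 0.
Let hPl : forall a x, P x -> P (a ** x).
Proof. by move=> a x; rewrite /P aM => ->; rewrite mul0r. Qed.
Let hPr : forall a x, P x -> P (x ** a).
Proof. by move=> a x; rewrite /P aM => ->; rewrite mul0l. Qed.
Let hPe : P (k eX). Proof. exact: ak. Qed.
Let hu1 : forall x, P x -> k eX ** x = x.
Proof. by move=> x /(@sk_ker _ _ _ E _) [y ->]; rewrite -kM (proj1 (heX y)). Qed.
Let hu2 : forall x, P x -> x ** k eX = x.
Proof. by move=> x /(@sk_ker _ _ _ E _) [y ->]; rewrite -kM (proj2 (heX y)). Qed.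

Lemma kPhi b : k (PhiE b) = k eX ** be b.
Proof. by apply: kinvK; apply: hPr; apply: hPe. Qed.

Lemma kx_beta x b : k x ** be b = k (x ** PhiE b).
Proof. by rewrite kM kPhi (R1 hPl hPr hPe hu1 hu2 _ (ak x)). Qed.
Lemma beta_kx x b : be b ** k x = k (PhiE b ** x).
Proof. by rewrite kM kPhi (R2 hPl hPr hPe hu1 hu2 _ (ak x)). Qed.

Lemma PhiE_hom : isHom PhiE.
Proof.
split=> [x y|c x|x y]; apply: (@sk_inj _ _ _ E).
- by rewrite kD !kPhi bD amulDr.
- by rewrite kZ !kPhi bZ amulZr.
- by rewrite kM !kPhi bM (R3 hPl hPr hPe hu1 hu2).
Qed.

Lemma aN x : al (- x) = - al x.
Proof. by apply: (addrI (al x)); rewrite -aD !subrr a0. Qed.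
Lemma kN x : k (- x) = - k x.
Proof. by apply: (addrI (k x)); rewrite -kD !subrr k0. Qed.
Lemma bN x : be (- x) = - be x.
Proof. by apply: (addrI (be x)); rewrite -bD !subrr b0. Qed.

Lemma decomp a : a = k (kinv (a - be (al a))) + be (al a).
Proof. by rewrite kinvK ?subrK // aD aN (ssplit E) subrr. Qed.

Lemma dec_uniq x b x' b' : k x + be b = k x' + be b' -> x = x' /\ b = b'.
Proof.
move=> H; have Hb : b = b'.
  by have := congr1 al H; rewrite !aD !ak !add0r !(ssplit E).
split=> //; apply: (@sk_inj _ _ _ E); subst b'.
by move/addIr: H.
Qed.

Lemma mul_dec x1 b1 x2 b2 :
  (k x1 + be b1) ** (k x2 + be b2) =
  k (x1 ** x2 + x1 ** PhiE b2 + PhiE b1 ** x2) + be (b1 ** b2).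
Proof.
rewrite !(amulDl, amulDr) kx_beta beta_kx -bM !kD.
by rewrite !addrA (kM x1 x2).
Qed.
End E.
End S.
Section T.
Variables (F : fieldType) (X : altAlg F) (eX : X).
Hypothesis heX : forall x : X, amul eX x = x /\ amul x eX = x.
Local Notation "x ** y" := (amul x y) (at level 40, left associativity).
Local Notation Phi := (PhiE eX).

Definition trans B (E E' : splExt B X) (a : sA E) : sA E' :=
  sk E' (kinv (a - sbeta E (salpha a))) + sbeta E' (salpha a).
Arguments trans {B} E E' a.

Lemma trans_dec B (E E' : splExt B X) x b :
  trans E E' (sk E x + sbeta E b) = sk E' x + sbeta E' b.
Proof.
have := decomp (sk E x + sbeta E b); case/dec_uniq => H1 H2.
by rewrite /trans -H1 -H2.
Qed.

Section P.
Variables (B : altAlg F).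
Definition pmul (p q : (X * B)%type) : (X * B)%type := (p.1 ** q.1, p.2 ** q.2).
Lemma pDl x y z : pmul (x + y) z = pmul x z + pmul y z.
Proof. by rewrite /pmul /= !amulDl. Qed.
Lemma pDr x y z : pmul x (y + z) = pmul x y + pmul x z.
Proof. by rewrite /pmul /= !amulDr. Qed.
Lemma pZl (a : F) x y : pmul (a *: x) y = a *: pmul x y.
Proof. by rewrite /pmul /= !amulZl. Qed.
Lemma pZr (a : F) x y : pmul x (a *: y) = a *: pmul x y.
Proof. by rewrite /pmul /= !amulZr. Qed.
Lemma pR x y : pmul (pmul y x) x = pmul y (pmul x x).
Proof. by rewrite /pmul /= !alt_right. Qed.
Lemma pL x y : pmul x (pmul x y) = pmul (pmul x x) y.
Proof. by rewrite /pmul /= !alt_left. Qed.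
Definition prodAlg := AltAlg pDl pDr pZl pZr pR pL.
End P.
End T.
Arguments trans {F X B} E E' a.
Lemma dec_add (F : fieldType) (X B : altAlg F) (E : splExt B X) x1 b1 x2 b2 :
  (sk E x1 + sbeta E b1) + (sk E x2 + sbeta E b2) = sk E (x1 + x2) + sbeta E (b1 + b2).
Proof. by rewrite kD bD addrACA. Qed.
Lemma dec_scale (F : fieldType) (X B : altAlg F) (E : splExt B X) (c : F) x b :
  c *: (sk E x + sbeta E b) = sk E (c *: x) + sbeta E (c *: b).
Proof. by rewrite kZ bZ scalerDr. Qed.

Lemma decE (F : fieldType) (X B : altAlg F) (E : splExt B X) (a : sA E) :
  exists x b, a = sk E x + sbeta E b.
Proof. by do 2 eexists; apply: decomp. Qed.

Theorem theorem3p2 (F : fieldType) (hF : 2%N \notin [pchar F])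
    (X : altAlg F) (hX : has_unit X) :
  exists Phi : forall B : altAlg F, splExt B X -> (B -> X),
    [/\ forall (B : altAlg F) (E : splExt B X), isHom (Phi B E),
        forall (B : altAlg F) (E E' : splExt B X),
          splExt_iso E E' -> Phi B E =1 Phi B E',
        forall (B : altAlg F) (E E' : splExt B X),
          Phi B E =1 Phi B E' -> splExt_iso E E',
        forall (B : altAlg F) (h : B -> X), isHom h ->
          exists E : splExt B X, Phi B E =1 h
      & forall (B B' : altAlg F) (f : B' -> B), isHom f ->
          forall (E : splExt B X) (E' : splExt B' X), isPullback f E E' ->
            Phi B' E' =1 (fun b' => Phi B E (f b'))].
Proof.
case: hX => eX heX.
exists (fun B E => PhiE eX E); split.
- by move=> B E; apply: PhiE_hom.
- move=> B E E' [phi [[pD pZ pM] _ pk pa pb]] b.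
  apply: (@sk_inj _ _ _ E').
  by rewrite -pk kPhi pM pk pb kPhi.
- move=> B E E' H; exists (trans E E'); split.
  + split=> [a1 a2|c a|a1 a2].
    * have [x1 [b1 ->]] := decE a1; have [x2 [b2 ->]] := decE a2.
      by rewrite dec_add !trans_dec dec_add.
    * have [x [b ->]] := decE a.
      by rewrite dec_scale !trans_dec dec_scale.
    * have [x1 [b1 ->]] := decE a1; have [x2 [b2 ->]] := decE a2.
      by rewrite (mul_dec heX) !trans_dec (mul_dec heX) !H.
  + exists (trans E' E) => a.
    * by have [x [b ->]] := decE a; rewrite !trans_dec.
    * by have [x [b ->]] := decE a; rewrite !trans_dec.
  + by move=> x; have := trans_dec E E' x 0; rewrite (b0 E) (b0 E') !addr0.
  + by move=> a; rewrite /trans aD ak add0r ssplit.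
  + by move=> b; have := trans_dec E E' 0 b; rewrite (k0 E) (k0 E') !add0r.
- move=> B h [hD hZ hM].
  pose A := prodAlg X B.
  have kh : isHom (fun x : X => (x, 0) : A).
    split=> [x y|c x|x y] /=.
    + by apply: injective_projections => /=; rewrite ?addr0.
    + by apply: injective_projections => /=; rewrite ?scaler0.
    + by rewrite /= /pmul /= mul0l.
  have ah : isHom (fun p : A => p.2) by [].
  have bh : isHom (fun b : B => (h b, b) : A).
    split=> [x y|c x|x y] /=.
    + by apply: injective_projections => /=; rewrite ?hD.
    + by apply: injective_projections => /=; rewrite ?hZ.
    + by rewrite /= /pmul /= hM.
  have spl : forall b, (fun p : A => p.2) ((fun b => (h b, b) : A) b) = b by [].
  have kinj : injective (fun x : X => (x, 0) : A) by move=> x y [].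
  have kker : forall a : A, a.2 = 0 <-> exists x, a = (x, 0).
    move=> [x y] /=; split; first by move=> ->; exists x.
    by case=> z [].
  pose E := SplExt kh ah bh spl kinj kker.
  exists E => b; apply: (@sk_inj _ _ _ E).
  rewrite kPhi /= /pmul /= mul0l.
  by case: (heX (h b)) => -> _.
- move=> B B' f fh E E' [g [[[gD gZ gM] ga] gk gb _ _]] b'.
  apply: (@sk_inj _ _ _ E).
  by rewrite -gk kPhi gM gk gb kPhi.
Qed.
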